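(* Let $\rho\in(0,\frac\pi2)$, $k>0$, $\eta>0$. For all $\delta_\omega\in\mathbb R^N$ and all $\tilde\theta,\tilde\theta^*\in\mathbb S(\rho)$, setting $\delta_\theta:=\tilde\theta-\tilde\theta^*$, the function $$V:=\tfrac12\delta_\omega^TM\delta_\omega+k\big(U(\tilde\theta)-U(\tilde\theta^* )-\nabla U(\tilde\theta^* )^T(\tilde\theta-\tilde\theta^* )\big)+\eta\big(\nabla U(\tilde\theta)-\nabla U(\tilde\theta^* )\big)^TY^TM^{1/2}\delta_\omega$$ satisfies $$V\le\tfrac34\delta_\omega^TM\delta_\omega+\big(\tfrac12k\lambda_N+\eta^2\lambda_N^2\big)|\delta_\theta|^2,$$ $$V\ge\tfrac14\delta_\omega^TM\delta_\omega+\big(\tfrac12k\lambda_2\sin(\rho)-\eta^2\lambda_N^2\big)|\delta_\theta|^2,$$ where $\lambda_2$ and $\lambda_N$ are the second-smallest and largest eigenvalues of $M^{-1}L_B$.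
   Context: Let $(\mathcal N,\mathcal E)$ be a connected undirected graph, $\mathcal N=\{1,\dots,N\}$, $E=|\mathcal E|$, with edge weights $B^0_{ij}>0$. Fix an edge orientation, let $A\in\mathbb R^{N\times E}$ be the node-edge incidence matrix, $\Gamma=\mathrm{diag}(B^0_{ij},\{i,j\}\in\mathcal E)$ and $L_B=A\Gamma A^T$. Let $M=\mathrm{diag}(M_1,\dots,M_N)$ with $M_i>0$ and $Y\in\mathbb R^{N\times(N-1)}$ a matrix whose columns form an orthonormal basis of the null space of $\mathbb 1_N^TM^{1/2}$. Define $U(\tilde\theta):=-\mathbb 1_E^T\Gamma\cos(A^TM^{-1/2}Y\tilde\theta)$ for $\tilde\theta\in\mathbb R^{N-1}$ (cosine elementwise), with gradient $\nabla U(\tilde\theta)=Y^TM^{-1/2}A\Gamma\sin(A^TM^{-1/2}Y\tilde\theta)$. For $\rho\in(0,\frac\pi2)$, $\mathbb S(\rho):=\{\tilde\theta:\max_l|(A^TM^{-1/2}Y\tilde\theta)_l|<\frac\pi2-\rho\}$. $|\cdot|$ is the Euclidean norm. *)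

(* Defs.v *)
From HB Require Import structures.
From mathcomp Require Import all_boot all_order all_algebra.
From mathcomp Require Import reals trigo.
Set Implicit Arguments. Unset Strict Implicit. Unset Printing Implicit Defensive.
Import Order.TTheory GRing.Theory Num.Theory.
Local Open Scope ring_scope.

Section Defs.
Variable R : realType.
Variables (N E : nat).

(* A graph on nodes 'I_N with E edges, edge e oriented from tl e to hd e. *)
Definition incidence (tl hd : 'I_E -> 'I_N) : 'M[R]_(N, E) :=
  \matrix_(i < N, e < E) ((i == tl e)%:R - (i == hd e)%:R).

Definition simple_graph (tl hd : 'I_E -> 'I_N) : Prop :=
  (forall e, tl e != hd e) /\
  (forall e e', [set tl e; hd e] = [set tl e'; hd e'] -> e = e').

Definition adjacent (tl hd : 'I_E -> 'I_N) : rel 'I_N :=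
  fun i j => [exists e, ((tl e == i) && (hd e == j)) || ((tl e == j) && (hd e == i))].

Definition connected_graph (tl hd : 'I_E -> 'I_N) : Prop :=
  forall i j, connect (adjacent tl hd) i j.

Definition Gammamx (B0 : 'I_E -> R) : 'M[R]_E := diag_mx (\row_e B0 e).

Definition LB (tl hd : 'I_E -> 'I_N) (B0 : 'I_E -> R) : 'M[R]_N :=
  incidence tl hd *m Gammamx B0 *m (incidence tl hd)^T.

Definition Mmx (m : 'I_N -> R) : 'M[R]_N := diag_mx (\row_i m i).
Definition Msqrt (m : 'I_N -> R) : 'M[R]_N := diag_mx (\row_i Num.sqrt (m i)).
Definition Minvsqrt (m : 'I_N -> R) : 'M[R]_N := diag_mx (\row_i (Num.sqrt (m i))^-1).
Definition Minv (m : 'I_N -> R) : 'M[R]_N := diag_mx (\row_i (m i)^-1).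

Definition Y_basis (m : 'I_N -> R) (Y : 'M[R]_(N, N.-1)) : Prop :=
  Y^T *m Y = 1%:M /\
  (const_mx 1 : 'rV[R]_N) *m Msqrt m *m Y = 0 /\
  (forall v : 'cV[R]_N, (const_mx 1 : 'rV[R]_N) *m Msqrt m *m v = 0 ->
      exists c : 'cV[R]_(N.-1), v = Y *m c).

Definition phase (tl hd : 'I_E -> 'I_N) (m : 'I_N -> R) (Y : 'M[R]_(N, N.-1))
  (th : 'cV[R]_(N.-1)) : 'cV[R]_E :=
  (incidence tl hd)^T *m Minvsqrt m *m Y *m th.

Definition Upot tl hd (B0 : 'I_E -> R) m Y (th : 'cV[R]_(N.-1)) : R :=
  - \sum_(e < E) B0 e * cos (phase tl hd m Y th e 0).

Definition gradU tl hd (B0 : 'I_E -> R) m Y (th : 'cV[R]_(N.-1)) : 'cV[R]_(N.-1) :=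
  Y^T *m Minvsqrt m *m incidence tl hd *m Gammamx B0 *m
    map_mx (@sin R) (phase tl hd m Y th).

Definition Sset tl hd m Y (rho : R) (th : 'cV[R]_(N.-1)) : Prop :=
  forall l : 'I_E, `|phase tl hd m Y th l 0| < pi / 2 - rho.

Definition sorted_eigenvalues (A : 'M[R]_N) (s : seq R) : Prop :=
  sorted <=%R s /\ char_poly A = \prod_(x <- s) ('X - x%:P).

Definition sc (a : 'M[R]_1) : R := a 0 0.

Definition sqnorm n (v : 'cV[R]_n) : R := \sum_(i < n) v i 0 ^+ 2.

End Defs.

(* Main.v *)
Require Import Defs.
From HB Require Import structures.
From mathcomp Require Import all_boot all_order all_algebra.
From mathcomp Require Import reals trigo.
From mathcomp Require Import all_classical all_reals all_analysis.
From mathcomp Require Import ring lra.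
Import Order.TTheory GRing.Theory Num.Theory.
Import numFieldNormedType.Exports.
Local Open Scope ring_scope.
Set Implicit Arguments. Unset Strict Implicit.

Section LA.
Variable R : realType.

Lemma scE k (u v : 'cV[R]_k) : sc (u^T *m v) = \sum_i u i 0 * v i 0.
Proof. by rewrite /sc mxE; apply: eq_bigr => i _; rewrite mxE. Qed.

Lemma sqnormE k (v : 'cV[R]_k) : sqnorm v = sc (v^T *m v).
Proof. by rewrite scE /sqnorm; apply: eq_bigr => i _; rewrite expr2. Qed.

Lemma sc_tr (a : 'M[R]_1) : sc a^T = sc a.
Proof. by rewrite /sc mxE. Qed.

Lemma sqnorm_ge0 k (v : 'cV[R]_k) : 0 <= sqnorm v.
Proof. by apply: sumr_ge0 => i _; exact: sqr_ge0. Qed.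

Lemma sqnorm_eq0 k (v : 'cV[R]_k) : sqnorm v = 0 -> v = 0.
Proof.
move=> h; apply/matrixP => i j; rewrite (ord1 j) mxE.
have := psumr_eq0P (fun i _ => sqr_ge0 (v i 0)) h (i:=i) isT.
by move/eqP; rewrite sqrf_eq0 => /eqP.
Qed.

Lemma char_poly_tr n (A : 'M[R]_n) : char_poly A^T = char_poly A.
Proof.
rewrite /char_poly -det_tr; congr (\det _); apply/matrixP => i j.
by rewrite !mxE eq_sym.
Qed.

Lemma sum_eq1 n (a : 'I_n) : \sum_i ((i == a)%:R : R) = 1.
Proof.
rewrite (bigD1 a) //= eqxx big1 ?addr0 // => i /negbTE ->; by [].
Qed.


Lemma scD (a b : 'M[R]_1) : sc (a + b) = sc a + sc b.
Proof. by rewrite /sc mxE. Qed.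
Lemma scB (a b : 'M[R]_1) : sc (a - b) = sc a - sc b.
Proof. by rewrite /sc !mxE. Qed.
Lemma scZ c (a : 'M[R]_1) : sc (c *: a) = c * sc a.
Proof. by rewrite /sc mxE. Qed.

Lemma lagrange k (S : 'M[R]_k) (x0 : 'cV[R]_k) : S^T = S ->
  (forall x, 0 <= sc (x^T *m S *m x)) -> sc (x0^T *m S *m x0) = 0 -> S *m x0 = 0.
Proof.
move=> Ssym psd h0; set r := S *m x0.
have key : forall t, sc ((x0 + t *: r)^T *m S *m (x0 + t *: r)) =
    t * 2 * sqnorm r + t ^+ 2 * sc (r^T *m S *m r).
  move=> t; rewrite [(x0 + t *: r)^T]linearD /= [X in (_ + X) *m _]linearZ /= !mulmxDl !mulmxDr.
  rewrite -!scalemxAl -!scalemxAr !scD !scZ h0.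
  have e1 : sc (x0^T *m S *m r) = sqnorm r.
    by rewrite sqnormE /r trmx_mul Ssym !mulmxA.
  have e2 : sc (r^T *m S *m x0) = sqnorm r by rewrite sqnormE -mulmxA.
  by rewrite e1 e2; ring.
set q := sqnorm r; set h := sc (r^T *m S *m r).
have hh : 0 <= h := psd r.
have hq : 0 <= q := sqnorm_ge0 r.
have := psd (x0 + (- q / (h + 1)) *: r); rewrite key.
have -> : - q / (h + 1) * 2 * q + (- q / (h + 1)) ^+ 2 * h = - (q ^+ 2 * (h + 2)) / (h + 1) ^+ 2.
  by field; rewrite gt_eqF //; lra.
rewrite pmulr_lge0 ?invr_gt0 ?exprn_gt0 //; last lra.
rewrite oppr_ge0 => hle.
have hq0 : q = 0 by nra.
exact: sqnorm_eq0.
Qed.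

Lemma sum_eq1M n (a : 'I_n) (g : 'I_n -> R) : \sum_i ((i == a)%:R * g i) = g a.
Proof.
rewrite (bigD1 a) //= eqxx mul1r big1 ?addr0 // => i /negbTE ->; by rewrite mul0r.
Qed.

Lemma cont_sum n (I : Type) (r : seq I) (F : I -> 'rV[R]_n -> R) :
  (forall i, continuous (F i : 'rV[R]_n -> R)) -> continuous (fun v : 'rV[R]_n => \sum_(i <- r) F i v : R).
Proof.
move=> hF; elim: r => [|a r IH].
  under eq_fun do rewrite big_nil. exact: cst_continuous.
under eq_fun do rewrite big_cons.
move=> x; exact: (@continuousD _ _ _ (F a) (fun v => \sum_(i <- r) F i v) x (hF a x) (IH x)).
Qed.

Lemma cont_sq n : continuous (fun v : 'rV[R]_n => \sum_i v ord0 i ^+ 2).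
Proof.
apply: cont_sum => i x.
rewrite /GRing.exp /=.
apply: (@continuousM _ _ (fun v : 'rV[R]_n => v ord0 i) (fun v : 'rV[R]_n => v ord0 i) x);
 exact: coord_continuous.
Qed.

Lemma extremum n (n0 : (0 < n)%N) (q : 'rV[R]_n -> R) (hq : continuous q) :
  exists2 c : 'rV[R]_n, \sum_i c ord0 i ^+ 2 = 1 &
     forall v : 'rV[R]_n, \sum_i v ord0 i ^+ 2 = 1 -> q v <= q c.
Proof.
Local Open Scope classical_set_scope.
pose C := [set v : 'rV[R]_n | forall i, `[-1, 1]%classic (v ord0 i)].
pose P := (fun v : 'rV[R]_n => \sum_i v ord0 i ^+ 2) @^-1` [set 1].
have cC : compact C := @rV_compact R n (fun=> `[-1, 1]%classic) (fun=> @segment_compact R (-1) 1).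
have cP : closed P.
  apply: preimage_closed; last exact: closed_eq.
  move=> x _; exact: cont_sq.
have cS := compact_closedI cC cP.
have ne : (C `&` P) !=set0.
  exists (\row_j (j == Ordinal n0)%:R); split.
    move=> i; rewrite mxE /= in_itv /=; case: (i == _) => /=; lra.
  rewrite /P /= (bigD1 (Ordinal n0)) //= big1 ?mxE ?eqxx ?addr0 ?expr1n //.
  by move=> i /negbTE; rewrite mxE => ->; rewrite expr0n.
have hw : {within C `&` P, continuous q} by apply: continuous_subspaceT.
have [c hc hmax] := EVT_max_rV ne cS hw.
exists c; first by move: hc; rewrite inE => -[].
move=> v hv; apply: hmax; rewrite inE; split => //.
move=> i; rewrite /= in_itv /=.
have : v ord0 i ^+ 2 <= 1.
  rewrite -hv (bigD1 i) //= lerDl; apply: sumr_ge0 => j _; exact: sqr_ge0.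
move=> h; apply/andP; split; nra.
Qed.


Lemma cross_bound k (c : R) (u v : 'cV[R]_k) :
  c * sc (u^T *m v) <= c ^+ 2 * sqnorm u + sqnorm v / 4 /\
  - (c * sc (u^T *m v)) <= c ^+ 2 * sqnorm u + sqnorm v / 4.
Proof.
rewrite scE /sqnorm mulr_sumr mulr_sumr mulr_suml -big_split /= -sumrN.
split; apply: ler_sum => i _; rewrite -subr_ge0.
  have -> : c ^+ 2 * u i 0 ^+ 2 + v i 0 ^+ 2 / 4 - c * (u i 0 * v i 0) = (c * u i 0 - v i 0 / 2) ^+ 2 by field.
  exact: sqr_ge0.
have -> : c ^+ 2 * u i 0 ^+ 2 + v i 0 ^+ 2 / 4 - - (c * (u i 0 * v i 0)) = (c * u i 0 + v i 0 / 2) ^+ 2 by field.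
exact: sqr_ge0.
Qed.

Definition betw (a b z : R) := (a <= z <= b) \/ (b <= z <= a).

Lemma mvt_gen (f df : R -> R) : (forall x : R, is_derive x (1:R) f (df x)) ->
  forall a b, exists2 c, betw a b c & f b - f a = df c * (b - a).
Proof.
move=> hd a b.
have hc : forall u v : R, _ := fun u v => @derivable_within_continuous R R f (`[u, v])%R (fun x _ => @ex_derive _ _ _ _ _ _ _ (hd x)).
case: (leP a b) => ab.
  have [c hc1 hc2] := MVT_segment ab (fun x _ => hd x) (hc a b).
  exists c => //; left; by rewrite in_itv /= in hc1.
have [c hc1 hc2] := MVT_segment (ltW ab) (fun x _ => hd x) (hc b a).
exists c; first by right; rewrite in_itv /= in hc1.
by rewrite -opprB hc2 -mulrN opprB.
Qed.

Lemma betw_sym a b z : betw a b z -> betw b a z.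
Proof. by case=> ?; [right|left]. Qed.

Lemma breg_core (c a b : R) : exists2 eta, betw a b eta &
  exists2 xi, betw a b xi & 
  cos b - cos a - sin b * (a - b) - c / 2 * (a - b) ^+ 2 = (cos eta - c) * ((xi - b) * (a - b))
  /\ 0 <= (xi - b) * (a - b).
Proof.
pose F := fun t : R => cos b - cos t - sin b * (t - b) - c/2 * (t - b)^+2.
have dF : forall t : R, is_derive t (1:R) F (sin t - sin b - c * (t - b)).
  move=> t; rewrite /F; apply: is_derive_eq.
  rewrite [in X in _ = X]mulrC /GRing.scale /=; lra.
have [xi hxi ExF] := mvt_gen dF b a.
have dS : forall t : R, is_derive t (1:R) (@sin R) (cos t) by move=> t; exact: is_derive_sin.
have [eta heta ES] := mvt_gen dS b xi.
have hx : betw a b xi by exact: betw_sym.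
exists eta.
  case: hx => /andP[h1 h2]; case: heta => /andP[h3 h4];
  by case: (leP a b) => ab; [left|right]; apply/andP; split; lra.
exists xi => //.
have Fb : F b = 0.
  by rewrite /F /=; ring.
move: ExF; rewrite Fb subr0 /F => ->.
rewrite ES; split; first by ring.
by case: hx => /andP[h1 h2]; nra.
Qed.

Lemma breg_lo (c a b : R) : (forall z, betw a b z -> c <= cos z) ->
  c / 2 * (a - b) ^+ 2 <= cos b - cos a - sin b * (a - b).
Proof.
move=> hc; have [eta he [xi hxi [E P]]] := breg_core c a b.
by rewrite -subr_ge0 E; apply: mulr_ge0 => //; rewrite subr_ge0; exact: hc.
Qed.

Lemma breg_up (a b : R) : cos b - cos a - sin b * (a - b) <= 1 / 2 * (a - b) ^+ 2.
Proof.
have [eta he [xi hxi [E P]]] := breg_core 1 a b.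
rewrite -subr_le0 E; apply: mulr_le0_ge0 => //; rewrite subr_le0; exact: cos_le1.
Qed.

Lemma sin_lip (a b : R) : (sin a - sin b) ^+ 2 <= (a - b) ^+ 2.
Proof.
have dS : forall t : R, is_derive t (1:R) (@sin R) (cos t) by move=> t; exact: is_derive_sin.
have [z _ E] := mvt_gen dS b a.
rewrite E exprMn -[X in _ <= X]mul1r ler_wpM2r ?sqr_ge0 //.
Qed.

Lemma cos_ge_sin (rho z : R) : 0 < rho -> rho < pi / 2 -> `|z| < pi / 2 - rho -> sin rho <= cos z.
Proof.
move=> r0 r1 hz; rewrite -cos_norm.
have -> : sin rho = cos (pi / 2 - rho).
  by rewrite cosB cos_pihalf sin_pihalf mul0r add0r mul1r.
have pi0 := pi_gt0 R.
apply/ltW; rewrite ltr_cos // ?in_itv /= ?normr_ge0 /=; try (apply/andP; split); lra.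
Qed.

Lemma mxBE k l (M1 M2 : 'M[R]_(k,l)) i j : (M1 - M2) i j = M1 i j - M2 i j.
Proof. by rewrite !mxE. Qed.

Lemma betw_abs (a b z r : R) : betw a b z -> `|a| < r -> `|b| < r -> `|z| < r.
Proof.
rewrite !ltr_norml => hz /andP [h1 h2] /andP [h3 h4].
by case: hz => /andP [h5 h6]; apply/andP; split; lra.
Qed.

End LA.

Section G.
Variables (R : realType) (N E : nat) (tl hd : 'I_E -> 'I_N) (B0 : 'I_E -> R)
  (m : 'I_N -> R) (Y : 'M[R]_(N, N.-1)).
Hypotheses (hB0 : forall e, 0 < B0 e) (hm : forall i, 0 < m i) (hY : Y_basis m Y).

Local Notation A := (incidence R tl hd).
Definition Kmx := A^T *m Minvsqrt m *m Y.
Definition qf (x : 'cV[R]_(N.-1)) := \sum_e B0 e * ((Kmx *m x) e 0) ^+ 2.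
Definition Qmx := Kmx^T *m Gammamx B0 *m Kmx.

Lemma gradUE th : gradU tl hd B0 m Y th = Kmx^T *m (Gammamx B0 *m map_mx sin (Kmx *m th)).
Proof. by rewrite /gradU /Kmx !trmx_mul trmxK /Minvsqrt tr_diag_mx !mulmxA. Qed.

Lemma GammaE (v : 'cV[R]_E) e : (Gammamx B0 *m v) e 0 = B0 e * v e 0.
Proof. by rewrite /Gammamx mul_diag_mx !mxE. Qed.

Lemma qfE x : qf x = sc (x^T *m Qmx *m x).
Proof.
have -> : x^T *m Qmx *m x = (Kmx *m x)^T *m (Gammamx B0 *m (Kmx *m x)).
  by rewrite /Qmx [(Kmx *m x)^T]trmx_mul !mulmxA.
rewrite scE /qf; apply: eq_bigr => e _.
by rewrite GammaE expr2 mulrCA.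
Qed.

Lemma Qmx_sym : Qmx^T = Qmx.
Proof.
rewrite /Qmx (trmx_mul (Kmx^T *m Gammamx B0)) (trmx_mul (Kmx^T)) trmxK.
by rewrite [(Gammamx B0)^T]tr_diag_mx mulmxA.
Qed.

Lemma qf_ge0 x : 0 <= qf x.
Proof. apply: sumr_ge0 => e _; apply: mulr_ge0; [exact: ltW | exact: sqr_ge0]. Qed.

Lemma At1 : A^T *m (const_mx 1 : 'cV[R]_N) = 0.
Proof.
apply/matrixP => e j; rewrite !mxE.
under eq_bigr do rewrite !mxE mulr1.
by rewrite sumrB !sum_eq1 subrr.
Qed.

Lemma oneA : (const_mx 1 : 'rV[R]_N) *m A = 0.
Proof. by apply: trmx_inj; rewrite trmx_mul trmx_const At1 trmx0. Qed.

Lemma LB1 : LB tl hd B0 *m (const_mx 1 : 'cV[R]_N) = 0.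
Proof. by rewrite /LB -mulmxA At1 mulmx0. Qed.

Lemma sqrtm_neq0 i : Num.sqrt (m i) != 0.
Proof. by rewrite gt_eqF // sqrtr_gt0 hm. Qed.

Lemma MsMi : Msqrt m *m Minvsqrt m = 1%:M.
Proof.
rewrite /Msqrt /Minvsqrt mulmx_diag; apply/matrixP => i j; rewrite !mxE.
by case: eqP => [->|_]; rewrite ?mulr1n ?mulr0n // divff // sqrtm_neq0.
Qed.

Lemma MiMs : Minvsqrt m *m Msqrt m = 1%:M.
Proof.
rewrite /Msqrt /Minvsqrt mulmx_diag; apply/matrixP => i j; rewrite !mxE.
by case: eqP => [->|_]; rewrite ?mulr1n ?mulr0n // mulVf // sqrtm_neq0.
Qed.

Lemma MiMi : Minvsqrt m *m Minvsqrt m = Minv m.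
Proof.
rewrite /Minv /Minvsqrt mulmx_diag; congr diag_mx; apply/rowP => i; rewrite !mxE.
by rewrite -invfM -expr2 sqr_sqrtr // ltW.
Qed.


Lemma sqnormZ k (a : R) (x : 'cV[R]_k) : sqnorm (a *: x) = a ^+ 2 * sqnorm x.
Proof. rewrite /sqnorm mulr_sumr; apply: eq_bigr => i _; by rewrite mxE exprMn. Qed.

Lemma qfZ (a : R) x : qf (a *: x) = a ^+ 2 * qf x.
Proof.
rewrite /qf mulr_sumr; apply: eq_bigr => e _.
by rewrite -scalemxAr mxE exprMn mulrCA.
Qed.

Definition qr (v : 'rV[R]_(N.-1)) := \sum_e B0 e * (\sum_j Kmx e j * v ord0 j) ^+ 2.

Lemma qfr x : qf x = qr x^T.
Proof.
rewrite /qf /qr; apply: eq_bigr => e _; congr (_ * _ ^+ 2).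
by rewrite mxE; apply: eq_bigr => j _; rewrite [x^T _ _]mxE.
Qed.

Lemma cont_qr : continuous qr.
Proof.
apply: cont_sum => e x.
apply: (@continuousM _ _ (fun=> B0 e) (fun v : 'rV[R]_(N.-1) => (\sum_j Kmx e j * v ord0 j) ^+ 2) x).
  exact: cst_continuous.
rewrite /GRing.exp /=.
have hl : continuous (fun v : 'rV[R]_(N.-1) => \sum_j Kmx e j * v ord0 j).
  apply: cont_sum => j y.
  apply: (@continuousM _ _ (fun=> Kmx e j) (fun v : 'rV[R]_(N.-1) => v ord0 j) y).
    exact: cst_continuous.
  exact: coord_continuous.
exact: (@continuousM _ _ (fun v : 'rV[R]_(N.-1) => \sum_j Kmx e j * v ord0 j) (fun v : 'rV[R]_(N.-1) => \sum_j Kmx e j * v ord0 j) x (hl x) (hl x)).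
Qed.


Lemma sqnorm_tr k (c : 'rV[R]_k) : \sum_i c ord0 i ^+ 2 = sqnorm c^T.
Proof. by apply: eq_bigr => i _; rewrite mxE. Qed.

Lemma qf0 : qf 0 = 0.
Proof. by rewrite /qf big1 // => e _; rewrite mulmx0 mxE expr0n /= mulr0. Qed.

Lemma scale_unit (x : 'cV[R]_(N.-1)) : sqnorm x != 0 ->
  exists2 a : R, 0 < a /\ a ^+ 2 * sqnorm x = 1 & sqnorm (a *: x) = 1.
Proof.
move=> hx; have sx : 0 < sqnorm x by rewrite lt_def hx sqnorm_ge0.
exists (Num.sqrt (sqnorm x))^-1.
  split; first by rewrite invr_gt0 sqrtr_gt0.
  by rewrite exprVn sqr_sqrtr ?mulVf // ltW.
by rewrite sqnormZ exprVn sqr_sqrtr ?mulVf // ltW.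
Qed.

Lemma qf_max (n0 : (0 < N.-1)%N) :
  exists2 x0, sqnorm x0 = 1 & forall x, qf x <= qf x0 * sqnorm x.
Proof.
have [c hc hmax] := extremum n0 cont_qr.
exists c^T; first by rewrite -sqnorm_tr.
move=> x; case: (eqVneq (sqnorm x) 0) => [h|h].
  by rewrite h mulr0 (sqnorm_eq0 h) qf0.
have [a [a0 ha] hy] := scale_unit h.
have := hmax (a *: x)^T; rewrite sqnorm_tr trmxK => /(_ hy).
rewrite -!qfr qfZ => h1.
have := ler_wpM2r (sqnorm_ge0 x) h1.
by rewrite (qfr c^T) trmxK mulrAC ha mul1r.
Qed.

Lemma qf_min (n0 : (0 < N.-1)%N) :
  exists2 x0, sqnorm x0 = 1 & forall x, qf x0 * sqnorm x <= qf x.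
Proof.
have cq : continuous (fun v => - qr v).
  by move=> x; apply: continuousN; exact: cont_qr.
have [c hc hmax] := extremum n0 cq.
exists c^T; first by rewrite -sqnorm_tr.
move=> x; case: (eqVneq (sqnorm x) 0) => [h|h].
  by rewrite h mulr0 (sqnorm_eq0 h) qf0.
have [a [a0 ha] hy] := scale_unit h.
have := hmax (a *: x)^T; rewrite sqnorm_tr trmxK => /(_ hy).
rewrite lerN2 -!qfr qfZ => h1.
have := ler_wpM2r (sqnorm_ge0 x) h1.
by rewrite (qfr c^T) trmxK [X in _ <= X]mulrAC ha mul1r.
Qed.


Lemma quadS (mu : R) x : sc (x^T *m (mu%:M - Qmx) *m x) = mu * sqnorm x - qf x.
Proof.
by rewrite mulmxBr mulmxBl scB mul_mx_scalar -scalemxAl scZ -sqnormE -qfE.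
Qed.

Lemma symS (mu : R) : (mu%:M - Qmx)^T = mu%:M - Qmx.
Proof. by rewrite linearB /= tr_scalar_mx Qmx_sym. Qed.

Lemma Qeig_max x0 : sqnorm x0 = 1 -> (forall x, qf x <= qf x0 * sqnorm x) ->
  Qmx *m x0 = qf x0 *: x0.
Proof.
move=> h1 hmax.
have hS : ((qf x0)%:M - Qmx) *m x0 = 0.
  apply: lagrange; first exact: symS.
    move=> x; rewrite quadS subr_ge0; exact: hmax.
  by rewrite quadS h1 mulr1 subrr.
by move/eqP: hS; rewrite mulmxBl subr_eq0 mul_scalar_mx => /eqP <-.
Qed.

Lemma Qeig_min x0 : sqnorm x0 = 1 -> (forall x, qf x0 * sqnorm x <= qf x) ->
  Qmx *m x0 = qf x0 *: x0.
Proof.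
move=> h1 hmin.
have e : forall x, sc (x^T *m (- ((qf x0)%:M - Qmx)) *m x) = - (qf x0 * sqnorm x - qf x).
  by move=> x; rewrite mulmxN mulNmx /sc mxE -/(sc _) quadS.
have hS : (- ((qf x0)%:M - Qmx)) *m x0 = 0.
  apply: lagrange; first by rewrite linearN /= symS.
    move=> x; rewrite e oppr_ge0 subr_le0; exact: hmin.
  by rewrite e h1 mulr1 subrr oppr0.
by move/eqP: hS; rewrite mulNmx oppr_eq0 mulmxBl subr_eq0 mul_scalar_mx => /eqP <-.
Qed.

Lemma KT : Kmx^T = Y^T *m Minvsqrt m *m A.
Proof. by rewrite /Kmx !trmx_mul trmxK /Minvsqrt tr_diag_mx mulmxA. Qed.

Lemma eigvec (mu : R) (x0 : 'cV[R]_(N.-1)) : Qmx *m x0 = mu *: x0 ->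
  (Minv m *m LB tl hd B0) *m (Minvsqrt m *m (Y *m x0)) = mu *: (Minvsqrt m *m (Y *m x0)).
Proof.
move=> hq.
set z := Minvsqrt m *m A *m (Gammamx B0 *m (Kmx *m x0)).
have -> : (Minv m *m LB tl hd B0) *m (Minvsqrt m *m (Y *m x0)) = Minvsqrt m *m z.
  by rewrite -MiMi /LB /z /Kmx !mulmxA.
case: hY => hYY [h1 hker].
have hz : (const_mx 1 : 'rV[R]_N) *m Msqrt m *m z = 0.
  by rewrite /z !mulmxA -(mulmxA _ (Msqrt m)) MsMi mulmx1 oneA !mul0mx.
have [c hc] := hker z hz.
have hYz : Y^T *m z = Qmx *m x0.
  by rewrite /z /Qmx KT !mulmxA.
have : z = Y *m (Y^T *m z) by rewrite {2}hc (mulmxA Y^T) hYY mul1mx -hc.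
rewrite hYz hq -scalemxAr => ->.
by rewrite -scalemxAr.
Qed.

Lemma eigvec_nz (x0 : 'cV[R]_(N.-1)) : sqnorm x0 = 1 -> Minvsqrt m *m (Y *m x0) != 0.
Proof.
move=> h1; apply/eqP => h0.
have : Y *m x0 = 0 by rewrite -[Y *m x0]mul1mx -MsMi -mulmxA h0 mulmx0.
move=> hy; have : sqnorm x0 = 0.
  case: hY => hYY _.
  by rewrite sqnormE -[x0]mul1mx -hYY -mulmxA hy mulmx0 mulmx0 /sc mxE.
by rewrite h1 => /eqP; rewrite oner_eq0.
Qed.


Lemma eig_in_s (s : seq R) (mu : R) (v : 'cV[R]_N) :
  sorted_eigenvalues (Minv m *m LB tl hd B0) s -> v != 0 ->
  (Minv m *m LB tl hd B0) *m v = mu *: v -> mu \in s.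
Proof.
move=> [_ hs] hv he.
have : eigenvalue (Minv m *m LB tl hd B0)^T mu.
  apply/eigenvalueP; exists v^T; last by rewrite trmx_eq0.
  by rewrite -trmx_mul he linearZ.
by rewrite eigenvalue_root_char char_poly_tr hs root_prod_XsubC.
Qed.

Lemma conn_const (f : 'I_N -> R) : connected_graph tl hd ->
  (forall e, f (tl e) = f (hd e)) -> forall i j, f i = f j.
Proof.
move=> hc hf i j; have /connectP [p hp ->] := hc i j.
elim: p i hp => [|a p IH] i //= /andP [hia hp].
rewrite -(IH a hp).
case/existsP: hia => e /orP [/andP [/eqP <- /eqP <-] | /andP [/eqP <- /eqP <-]] //.
Qed.

Lemma AtE (w : 'cV[R]_N) e : (A^T *m w) e 0 = w (tl e) 0 - w (hd e) 0.
Proof.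
rewrite mxE; under eq_bigr do rewrite !mxE mulrBl.
by rewrite sumrB !sum_eq1M.
Qed.

Lemma qf0_false (n0 : (0 < N)%N) (x0 : 'cV[R]_(N.-1)) : connected_graph tl hd ->
  sqnorm x0 = 1 -> qf x0 = 0 -> False.
Proof.
move=> hc h1 hq.
set w := Minvsqrt m *m (Y *m x0).
have hK : forall e, (Kmx *m x0) e 0 = 0.
  move=> e; have := psumr_eq0P (fun e _ => mulr_ge0 (ltW (hB0 e)) (sqr_ge0 ((Kmx *m x0) e 0))) hq (i:=e) isT.
  move/eqP; rewrite mulf_eq0 gt_eqF ?hB0 //= sqrf_eq0 => /eqP //.
have hw : forall e, w (tl e) 0 = w (hd e) 0.
  move=> e; apply/eqP; rewrite -subr_eq0 -AtE /w.
  have -> : A^T *m (Minvsqrt m *m (Y *m x0)) = Kmx *m x0 by rewrite /Kmx !mulmxA.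
  by rewrite hK.
pose i0 := Ordinal n0.
have hcst := conn_const (f:=fun i => w i 0) hc hw.
case: hY => _ [h1Y _].
have hYx : Y *m x0 = Msqrt m *m w by rewrite /w mulmxA MsMi mul1mx.
have : ((const_mx 1 : 'rV[R]_N) *m Msqrt m *m (Msqrt m *m w)) 0 0 = 0.
  by rewrite -hYx mulmxA h1Y mul0mx mxE.
have wdef : w = Minvsqrt m *m (Y *m x0) by [].
clearbody w.
rewrite /Msqrt mul_mx_diag mul_diag_mx mxE.
under eq_bigr do rewrite !mxE mul1r mulrA -expr2 sqr_sqrtr ?(ltW (hm _)) // (hcst _ i0).
rewrite -mulr_suml => /eqP; rewrite mulf_eq0 => /orP [/eqP hs|/eqP hw0].
  have : 0 < \sum_i m i by rewrite (bigD1 i0) //= ltr_wpDr ?hm // sumr_ge0 // => i _; exact: ltW.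
  by rewrite hs ltxx.
have hw00 : w = 0.
  by apply/matrixP => i j; rewrite (ord1 j) (hcst i i0) hw0 mxE.
by move: (eigvec_nz h1); rewrite -wdef hw00 eqxx.
Qed.


Lemma EIG (hN : (1 < N)%N) (s : seq R)
  (hs : sorted_eigenvalues (Minv m *m LB tl hd B0) s) (hc : connected_graph tl hd) :
  0 <= s`_(N.-1) /\ forall x, s`_1 * sqnorm x <= qf x /\ qf x <= s`_(N.-1) * sqnorm x.
Proof.
have n0 : (0 < N)%N by apply: ltn_trans hN.
have n1 : (0 < N.-1)%N by case: (N) hN => [|[|n]].
have nN : (N.-1 < N)%N by rewrite ltn_predL.
have hsz : size s = N.
  case: hs => _ h; have := size_char_poly (Minv m *m LB tl hd B0).
  by rewrite h size_prod_XsubC; case.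
have le_nth : forall i j, (i <= j)%N -> (j < N)%N -> s`_i <= s`_j.
  move=> i j ij jN; apply: (sorted_leq_nth le_trans lexx 0 hs.1) => //;
  rewrite inE hsz //; exact: leq_ltn_trans ij jN.
have z_in : 0 \in s.
  apply: (eig_in_s (v := const_mx 1) hs).
    apply/eqP => /matrixP /(_ (Ordinal n0) 0); rewrite !mxE => /eqP; by rewrite oner_eq0.
  by rewrite -mulmxA LB1 mulmx0 scale0r.
have z_idx : s`_(index 0 s) = 0 := nth_index 0 z_in.
have iz : (index (0%R : R) s < N)%N by rewrite -hsz index_mem.
have hN0 : 0 <= s`_(N.-1) by rewrite -{1}z_idx; apply: le_nth; rewrite // -ltnS prednK.
split => //.
have [x1 hx1 hmax] := qf_max n1.
have e1 := Qeig_max hx1 hmax.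
have in1 := eig_in_s hs (eigvec_nz hx1) (eigvec e1).
have up : qf x1 <= s`_(N.-1).
  rewrite -(nth_index 0 in1); apply: le_nth => //.
  by rewrite -ltnS prednK // -hsz index_mem.
have [x2 hx2 hmin] := qf_min n1.
have e2 := Qeig_min hx2 hmin.
have in2 := eig_in_s hs (eigvec_nz hx2) (eigvec e2).
have lo : s`_1 <= qf x2.
  rewrite -(nth_index 0 in2).
  case hi: (index (qf x2) s) => [|j].
    exfalso.
    have : qf x2 <= 0 by rewrite -(nth_index 0 in2) hi -{2}z_idx; apply: le_nth.
    move=> h0; apply: (qf0_false n0 hc hx2).
    by apply/eqP; rewrite eq_le h0 qf_ge0.
  apply: le_nth => //; rewrite -hi -hsz index_mem //.
move=> x; split.
  exact: le_trans (ler_wpM2r (sqnorm_ge0 x) lo) (hmin x).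
exact: le_trans (hmax x) (ler_wpM2r (sqnorm_ge0 x) up).
Qed.


Lemma bessel (z : 'cV[R]_N) : sqnorm (Y^T *m z) <= sqnorm z.
Proof.
case: hY => hYY _.
set u := Y^T *m z; set p := Y *m u.
have e1 : z^T *m p = u^T *m u by rewrite /p /u trmx_mul trmxK mulmxA.
have e2 : p^T *m z = u^T *m u by rewrite /p trmx_mul -mulmxA.
have e3 : p^T *m p = u^T *m u by rewrite /p trmx_mul -mulmxA (mulmxA Y^T) hYY mul1mx.
have : sqnorm (z - p) = sqnorm z - sqnorm u.
  rewrite !sqnormE [(z - p)^T]linearB /= mulmxBl !mulmxBr !scB e1 e2 e3.
  lra.
have := sqnorm_ge0 (z - p); lra.
Qed.

Lemma breg_id th ths :
  Upot tl hd B0 m Y th - Upot tl hd B0 m Y ths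
    - sc ((gradU tl hd B0 m Y ths)^T *m (th - ths)) =
  \sum_e B0 e * (cos ((Kmx *m ths) e 0) - cos ((Kmx *m th) e 0)
     - sin ((Kmx *m ths) e 0) * ((Kmx *m th) e 0 - (Kmx *m ths) e 0)).
Proof.
rewrite gradUE trmx_mul trmxK -mulmxA scE /Upot /phase -/Kmx.
rewrite -!sumrN -!big_split /=; apply: eq_bigr => e _.
rewrite GammaE mulmxBr !mxE; ring.
Qed.

Lemma gdiff th ths : gradU tl hd B0 m Y th - gradU tl hd B0 m Y ths =
  Kmx^T *m (\col_e (B0 e * (sin ((Kmx *m th) e 0) - sin ((Kmx *m ths) e 0)))).
Proof.
rewrite !gradUE -mulmxBr; congr (_ *m _); apply/matrixP => e j.
by rewrite (ord1 j) -mulmxBr GammaE !mxE.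
Qed.

Lemma G_bound th ths (t : R) (g : 'cV[R]_(N.-1)) : 0 < t ->
  g = gradU tl hd B0 m Y th - gradU tl hd B0 m Y ths ->
  sqnorm g <= t / 2 * qf g + (2 * t)^-1 * qf (th - ths).
Proof.
move=> t0 gdef.
have hg : sqnorm g = \sum_e B0 e * (sin ((Kmx *m th) e 0) - sin ((Kmx *m ths) e 0)) * (Kmx *m g) e 0.
  rewrite sqnormE {1}gdef gdiff trmx_mul trmxK -mulmxA scE.
  by apply: eq_bigr => e _; rewrite mxE.
rewrite hg /qf mulmxBr mulr_sumr mulr_sumr -big_split /=.
apply: ler_sum => e _; rewrite mxBE.
set d := sin _ - sin _; set u := (Kmx *m g) e 0.
have hdd : d ^+ 2 <= ((Kmx *m th) e 0 - (Kmx *m ths) e 0) ^+ 2 by exact: sin_lip.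
set ab := (Kmx *m th) e 0 - _ in hdd *.
have hb := hB0 e.
have h1 : 2 * t * (d * u) <= t ^+ 2 * u ^+ 2 + d ^+ 2.
  rewrite -subr_ge0.
  have -> : t ^+ 2 * u ^+ 2 + d ^+ 2 - 2 * t * (d * u) = (t * u - d) ^+ 2 by ring.
  exact: sqr_ge0.
have h2 : B0 e * d ^+ 2 <= B0 e * ab ^+ 2 by apply: ler_wpM2l => //; exact: ltW.
have ht : 0 < 2 * t by lra.
rewrite -(ler_pM2l ht).
have -> : 2 * t * (t / 2 * (B0 e * u ^+ 2) + (2 * t)^-1 * (B0 e * ab ^+ 2)) =
   t ^+ 2 * B0 e * u ^+ 2 + B0 e * ab ^+ 2 by field; lra.
nra.
Qed.


Lemma Kdth (th ths : 'cV[R]_(N.-1)) e : (Kmx *m (th - ths)) e 0 = (Kmx *m th) e 0 - (Kmx *m ths) e 0.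
Proof. by rewrite mulmxBr mxBE. Qed.

Lemma breg_upper th ths :
  Upot tl hd B0 m Y th - Upot tl hd B0 m Y ths
    - sc ((gradU tl hd B0 m Y ths)^T *m (th - ths)) <= 2^-1 * qf (th - ths).
Proof.
rewrite breg_id /qf mulr_sumr; apply: ler_sum => e _.
rewrite Kdth mulrCA; apply: ler_wpM2l; first exact: ltW.
by have := breg_up ((Kmx *m th) e 0) ((Kmx *m ths) e 0); rewrite mul1r.
Qed.

Lemma breg_lower th ths rho : 0 < rho -> rho < pi / 2 ->
  Sset tl hd m Y rho th -> Sset tl hd m Y rho ths ->
  sin rho / 2 * qf (th - ths) <=
  Upot tl hd B0 m Y th - Upot tl hd B0 m Y ths
    - sc ((gradU tl hd B0 m Y ths)^T *m (th - ths)).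
Proof.
move=> r0 r1 h1 h2.
rewrite breg_id /qf mulr_sumr; apply: ler_sum => e _.
rewrite Kdth mulrCA; apply: ler_wpM2l; first exact: ltW.
apply: breg_lo => z hz; apply: cos_ge_sin => //.
exact: betw_abs hz (h1 e) (h2 e).
Qed.

Lemma Dsq (dw : 'cV[R]_N) : sc (dw^T *m Mmx m *m dw) = sqnorm (Msqrt m *m dw).
Proof.
rewrite -mulmxA scE /sqnorm; apply: eq_bigr => i _.
rewrite /Mmx /Msqrt !mul_diag_mx !mxE exprMn sqr_sqrtr ?(ltW (hm i)) //.
by rewrite expr2 mulrCA.
Qed.

End G.

Unset Implicit Arguments.

Theorem lemmaD3 (R : realType) (N E : nat) (hN : (1 < N)%N)
  (tl hd : 'I_E -> 'I_N) (B0 : 'I_E -> R) (m : 'I_N -> R)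
  (Y : 'M[R]_(N, N.-1)) (s : seq R)
  (hsimple : simple_graph tl hd) (hconn : connected_graph tl hd)
  (hB0 : forall e, 0 < B0 e) (hm : forall i, 0 < m i)
  (hY : Y_basis m Y)
  (hs : sorted_eigenvalues (Minv m *m LB tl hd B0) s)
  (rho k eta : R) (hrho0 : 0 < rho) (hrho1 : rho < pi / 2)
  (hk : 0 < k) (heta : 0 < eta)
  (dw : 'cV[R]_N) (th ths : 'cV[R]_(N.-1))
  (hth : Sset tl hd m Y rho th) (hths : Sset tl hd m Y rho ths) :
  let lam2 := s`_1 in
  let lamN := s`_N.-1 in
  let dth := th - ths in
  let V := 2^-1 * sc (dw^T *m Mmx m *m dw)
         + k * (Upot tl hd B0 m Y th - Upot tl hd B0 m Y ths
                - sc ((gradU tl hd B0 m Y ths)^T *m dth))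
         + eta * sc ((gradU tl hd B0 m Y th - gradU tl hd B0 m Y ths)^T
                      *m Y^T *m Msqrt m *m dw) in
  V <= 3 / 4 * sc (dw^T *m Mmx m *m dw)
       + (2^-1 * k * lamN + eta ^+ 2 * lamN ^+ 2) * sqnorm dth /\
  4^-1 * sc (dw^T *m Mmx m *m dw)
       + (2^-1 * k * lam2 * sin rho - eta ^+ 2 * lamN ^+ 2) * sqnorm dth <= V.
Proof.
move=> lam2 lamN dth V; rewrite /V {V} /lamN /lam2 {lamN lam2}.
have [hN0 hE] := EIG hB0 hm hY hN hs hconn.
set L := s`_(N.-1) in hN0 hE *.
set l2 := s`_1 in hE *.
have [hqlo hqup] := hE dth.
set D := sc (dw^T *m Mmx m *m dw).
set Br := Upot tl hd B0 m Y th - Upot tl hd B0 m Y ths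
   - sc ((gradU tl hd B0 m Y ths)^T *m dth).
set g := gradU tl hd B0 m Y th - gradU tl hd B0 m Y ths.
set w := Y^T *m (Msqrt m *m dw).
have hBup : Br <= 2^-1 * qf tl hd B0 m Y dth := breg_upper tl hd m Y hB0 th ths.
have hBlo : sin rho / 2 * qf tl hd B0 m Y dth <= Br := breg_lower hB0 hrho0 hrho1 hth hths.
have hW : sqnorm w <= D by rewrite /D (Dsq hm); exact: (bessel hY).
have hC : sc (g^T *m Y^T *m Msqrt m *m dw) = sc (g^T *m w) by rewrite /w !mulmxA.
have [hC1 hC2] := cross_bound eta g w.
have hS := sqnorm_ge0 dth.
have hG : sqnorm g <= L ^+ 2 * sqnorm dth.
  have [_ hgq] := hE g.
  have hg0 := sqnorm_ge0 g.
  case: (ltrP 0 L) => hl.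
    have hlV : 0 < L^-1 by rewrite invr_gt0.
    have := @G_bound _ _ _ tl hd B0 m Y hB0 th ths L^-1 g hlV erefl.
    have a1 : L^-1 / 2 * qf tl hd B0 m Y g <= sqnorm g / 2.
      have e : L^-1 / 2 * (L * sqnorm g) = sqnorm g / 2 by field; rewrite gt_eqF.
      rewrite -e; apply: ler_wpM2l => //; apply: divr_ge0; [exact: ltW | lra].
    have a2 : (2 * L^-1)^-1 * qf tl hd B0 m Y dth <= L ^+ 2 * sqnorm dth / 2.
      have -> : (2 * L^-1)^-1 = L / 2 by field; rewrite gt_eqF.
      have e : L / 2 * (L * sqnorm dth) = L ^+ 2 * sqnorm dth / 2 by field.
      rewrite -e; apply: ler_wpM2l => //; apply: divr_ge0; [exact: ltW | lra].
    lra.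
  have hl0 : L = 0 by apply/eqP; rewrite eq_le hl hN0.
  have := @G_bound _ _ _ tl hd B0 m Y hB0 th ths 1 g ltr01 erefl.
  rewrite hl0 mul0r in hgq hqup; rewrite hl0 expr0n /= mul0r.
  have hq1 := qf_ge0 tl hd m Y hB0 g.
  have hq2 := qf_ge0 tl hd m Y hB0 dth.
  lra.
rewrite hC.
have hk0 := ltW hk.
have he2 : 0 <= eta ^+ 2 := sqr_ge0 eta.
have p2 : eta ^+ 2 * sqnorm g <= eta ^+ 2 * (L ^+ 2 * sqnorm dth) by apply: ler_wpM2l.
have hsin : 0 <= sin rho by apply: ltW; apply: sin_gt0_pihalf; apply/andP; split.
split.
  have p1 : k * Br <= k * (2^-1 * (L * sqnorm dth)).
    apply: ler_wpM2l => //; apply: le_trans hBup _; apply: ler_wpM2l => //; lra.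
  lra.
have p3 : k * (sin rho / 2 * (l2 * sqnorm dth)) <= k * Br.
  apply: ler_wpM2l => //; apply: le_trans _ hBlo; apply: ler_wpM2l => //.
  by apply: divr_ge0 => //; lra.
lra.
Qed.
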